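(* Let $p$ be a prime, $\sigma:\mathcal A_m\to\mathcal A_m^*$ a $p$-uniform morphism, $t\in\mathbb{N}^*$, $r=p^t$, and $\alpha\in\mathbb{F}_r$. Then for every positive integer $k$, $$M_{\sigma^{kt}}(\alpha)=\big(M_{\sigma^t}(\alpha)\big)^k.$$
   Context: $\mathcal A_m=\{0,\dots,m-1\}$. For $W=w_0\cdots w_{r'-1}\in\mathcal A_m^*$ and $j\in\mathcal A_m$, $\beta_{W,j}(T)=\sum_{i:\,w_i=j}T^{r'-1-i}\in\mathbb{F}_p[T]$ (zero if $j$ does not occur). For a uniform morphism $\tau$ on $\mathcal A_m$, $M_\tau(T)=(\beta_{\tau(i),j}(T))_{0\le i,j\le m-1}$, and $M_\tau(\alpha)$ is its evaluation at $T=\alpha$. *)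

(* Defs.v *)
From HB Require Import structures.
From mathcomp Require Import all_boot all_order all_algebra all_field.
Set Implicit Arguments. Unset Strict Implicit. Unset Printing Implicit Defensive.
Import GRing.Theory.
Local Open Scope ring_scope.

(* Alphabet A_m = 'I_m ; words are seq 'I_m ; a morphism is its letter images. *)
Definition morph_word (m : nat) (tau : 'I_m -> seq 'I_m) (w : seq 'I_m) : seq 'I_m :=
  flatten (map tau w).

Definition morph_iter (m : nat) (tau : 'I_m -> seq 'I_m) (n : nat) : 'I_m -> seq 'I_m :=
  fun i => iter n (morph_word tau) [:: i].

Definition uniform (m : nat) (k : nat) (tau : 'I_m -> seq 'I_m) : Prop :=
  forall i, size (tau i) = k.

Definition beta (p m : nat) (W : seq 'I_m) (j : 'I_m) : {poly 'F_p} :=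
  \sum_(i < size W | nth j W i == j) 'X^(size W - 1 - i).

Definition Mtau (p m : nat) (tau : 'I_m -> seq 'I_m) : 'M[{poly 'F_p}]_m :=
  \matrix_(i < m, j < m) beta p (tau i) j.

(* Evaluation of a polynomial of F_p[T] at alpha in a field F of characteristic p,
   via the canonical embedding F_p -> F (c |-> c%:R). *)
Definition evalFp (p : nat) (F : fieldType) (P : {poly 'F_p}) (alpha : F) : F :=
  (map_poly (fun c : 'F_p => (nat_of_ord c)%:R) P).[alpha].

Definition Mtau_at (p m : nat) (F : fieldType) (tau : 'I_m -> seq 'I_m) (alpha : F)
  : 'M[F]_m :=
  map_mx (fun P => evalFp P alpha) (Mtau p tau).

(* Main.v *)
Require Import Defs.
From HB Require Import structures.
From mathcomp Require Import all_boot all_order all_algebra all_field.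
From mathcomp Require Import ring zify.
Local Open Scope ring_scope.
Import GRing.Theory.

Section Eval.
Variables (p : nat) (F : fieldType).
Hypothesis pP : prime p.
Hypothesis chF : p \in [pchar F].

Lemma modF q n : q = p -> ((n %% q)%N%:R : F) = n%:R.
Proof. by move->; rewrite GRing.natr_mod_pchar. Qed.

Lemma f0 : (fun c : 'F_p => (nat_of_ord c)%:R : F) 0 = 0.
Proof. by []. Qed.

Lemma f1 : (fun c : 'F_p => (nat_of_ord c)%:R : F) 1 = 1.
Proof. by rewrite /= modF // Fp_cast. Qed.

Lemma fD a b : (fun c : 'F_p => (nat_of_ord c)%:R : F) (a + b)
   = (fun c : 'F_p => (nat_of_ord c)%:R : F) a + (fun c : 'F_p => (nat_of_ord c)%:R : F) b.
Proof. by rewrite /= modF ?Fp_cast // natrD. Qed.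

Lemma evalD (P Q : {poly 'F_p}) (x : F) : evalFp (P + Q) x = evalFp P x + evalFp Q x.
Proof.
rewrite /evalFp -hornerD; congr horner; apply/polyP=> i.
by rewrite coefD !coef_map_id0 // coefD fD.
Qed.

Lemma evalXn n (x : F) : evalFp ('X^n : {poly 'F_p}) x = x ^+ n.
Proof.
rewrite /evalFp.
have -> : map_poly (fun c : 'F_p => (nat_of_ord c)%:R : F) 'X^n = 'X^n.
  apply/polyP=> i; rewrite coef_map_id0 // !coefXn.
  by case: (i == n); [apply: f1 | apply: f0].
by rewrite hornerXn.
Qed.

Lemma eval0 (x : F) : evalFp (0 : {poly 'F_p}) x = 0.
Proof. by rewrite /evalFp map_poly0 horner0. Qed.

Fixpoint ev {m : nat} (W : seq 'I_m) (j : 'I_m) (x : F) : F :=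
  match W with
  | [::] => 0
  | w :: W' => (if w == j then x ^+ size W' else 0) + ev W' j x
  end.

Lemma beta_cons m (w : 'I_m) W j :
  beta p (w :: W) j = (if w == j then 'X^(size W) else 0) + beta p W j.
Proof.
rewrite /beta !(big_mkcond (fun i : 'I_ _ => _ == j)) big_ord_recl.
congr (_ + _); first by rewrite /= subn0 subn1.
apply: eq_bigr => i _; rewrite /=.
have -> : ((size W).+1 - 1 - bump 0 i = size W - 1 - i)%N.
  by rewrite /bump /=; lia.
by [].
Qed.

Lemma evalbeta m (W : seq 'I_m) j x : evalFp (beta p W j) x = ev W j x.
Proof.
elim: W => [|w W IH]; first by rewrite /beta big_ord0 eval0.
rewrite beta_cons evalD IH /=; case: (w == j).
  by rewrite evalXn.
by rewrite eval0.
Qed.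

Lemma ev_cat m (V1 V2 : seq 'I_m) j x :
  ev (V1 ++ V2) j x = x ^+ size V2 * ev V1 j x + ev V2 j x.
Proof.
elim: V1 => [|w V1 IH] /=; first by rewrite mulr0 add0r.
rewrite IH size_cat exprD; case: (w == j); ring.
Qed.

Lemma size_flat m (tau : 'I_m -> seq 'I_m) l U :
  (forall i, size (tau i) = l) -> size (flatten (map tau U)) = (l * size U)%N.
Proof.
move=> ut; elim: U => [|u U IH] /=; first by rewrite muln0.
by rewrite size_cat IH ut mulnS.
Qed.

Lemma ev_flat m (tau : 'I_m -> seq 'I_m) l U j x :
  (forall i, size (tau i) = l) ->
  ev (flatten (map tau U)) j x = \sum_(i < m) ev U i (x ^+ l) * ev (tau i) j x.
Proof.
move=> ut; elim: U => [|u U IH] /=.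
  by rewrite big1 // => i _; rewrite mul0r.
rewrite ev_cat IH (@size_flat _ _ _ U ut).
rewrite [in RHS](eq_bigr (fun i => (if u == i then (x ^+ l) ^+ size U else 0) * ev (tau i) j x
   + ev U i (x ^+ l) * ev (tau i) j x)); last by move=> i _ /=; rewrite mulrDl.
rewrite big_split /=; congr (_ + _).
rewrite (bigD1 u) //= eqxx big1 ?addr0; last first.
  by move=> i; rewrite eq_sym => /negbTE ->; rewrite mul0r.
by rewrite exprM.
Qed.

End Eval.

Section Morph.
Variables (m : nat) (sigma : 'I_m -> seq 'I_m).

Lemma mw_cat A B : morph_word sigma (A ++ B) = morph_word sigma A ++ morph_word sigma B.
Proof. by rewrite /morph_word map_cat flatten_cat. Qed.

Lemma mw_flat (g : 'I_m -> seq 'I_m) W :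
  morph_word sigma (flatten (map g W)) = flatten (map (fun i => morph_word sigma (g i)) W).
Proof. by elim: W => [|a W IH] //=; rewrite mw_cat IH. Qed.

Lemma iter_mw n W : iter n (morph_word sigma) W = flatten (map (morph_iter sigma n) W).
Proof.
elim: n W => [|n IH] W /=.
  by rewrite /morph_iter /=; elim: W => [|a W IHW] //=; rewrite -IHW.
by rewrite IH mw_flat.
Qed.

Lemma size_mw l W : uniform l sigma -> size (morph_word sigma W) = (l * size W)%N.
Proof. by move=> u; rewrite /morph_word (@size_flat _ _ _ W u). Qed.

Lemma size_iter l n i : uniform l sigma -> size (morph_iter sigma n i) = (l ^ n)%N.
Proof.
move=> u; rewrite /morph_iter.
suff H : forall W, size (iter n (morph_word sigma) W) = (l ^ n * size W)%N.
  by rewrite H muln1.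
elim: n => [|n IH] W /=; first by rewrite mul1n.
by rewrite (size_mw _ _ u) IH expnS mulnA.

Qed.

End Morph.

Theorem proposition4p14 (p : nat) (m : nat) (sigma : 'I_m -> seq 'I_m) (t : nat)
  (F : finFieldType) (alpha : F) :
  prime p -> uniform p sigma -> (0 < t)%N -> #|F| = (p ^ t)%N ->
  forall k : nat, (0 < k)%N ->
    Mtau_at p (morph_iter sigma (k * t)) alpha = (Mtau_at p (morph_iter sigma t) alpha) ^+ k.
Proof.
move=> pP us t0 cF.
have chF : p \in [pchar F] by apply: (card_finPcharP cF).
have ME : forall (tau : 'I_m -> seq 'I_m) i j,
    Mtau_at p tau alpha i j = ev _ (tau i) j alpha.
  by move=> tau i j; rewrite /Mtau_at !mxE (evalbeta _ _ pP chF).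
have ut : forall i, size (morph_iter sigma t i) = (p ^ t)%N.
  by move=> i; apply: size_iter.
have aE : alpha ^+ (p ^ t) = alpha by rewrite -cF expf_card.
elim=> // -[|k] IH _; first by rewrite mul1n expr1.
rewrite exprSr -IH //; apply/matrixP=> i j.
rewrite ME -mulmxE mxE.
have -> : morph_iter sigma (k.+2 * t) i
    = flatten (map (morph_iter sigma t) (morph_iter sigma (k.+1 * t) i)).
  by rewrite /morph_iter mulSn iterD iter_mw.
rewrite (@ev_flat F m (morph_iter sigma t) (p ^ t)%N _ j alpha ut).
apply: eq_bigr => l _.
by rewrite !ME aE.
Qed.
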